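(* Let $\ell,d\ge0$ be integers, $n=2^\ell$, $m=2^d$, and $\lambda=m/n=2^{d-\ell}$. Let $a$ be an integer with $d\ge a\ge\max\{1,d-\ell\}$. Then there exist a positive integer $N$ and a set $S\subseteq\mathbb{F}_2^N\setminus\{0\}$ of $m$ distinct nonzero vectors such that, for a uniformly random linear map $h:\mathbb{F}_2^N\to\mathbb{F}_2^\ell$, \[ \Pr\left[|\{x\in S: h(x)=0\}|>2^a-2\right]\ge\gamma^2\lambda^a2^{-a^2}, \] where $\gamma:=\prod_{j=1}^\infty(1-2^{-j})$.
   Context: A uniformly random linear map is chosen uniformly among all linear maps $\mathbb{F}_2^N\to\mathbb{F}_2^\ell$. *)

(* Defs.v *)
From HB Require Import structures.
From mathcomp Require Import all_boot all_order all_algebra.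
From mathcomp Require Import all_classical all_reals all_analysis.
Set Implicit Arguments. Unset Strict Implicit. Unset Printing Implicit Defensive.
Import Order.TTheory GRing.Theory Num.Theory numFieldNormedType.Exports.
Local Open Scope ring_scope.

Definition gamma_const (R : realType) : R :=
  limn ((fun n : nat => \prod_(j < n) (1 - (2%:R ^+ j.+1)^-1 : R)) : R^nat).

(* A linear map h : F_2^N -> F_2^l is represented by its matrix A, with
   h x = x *m A (x a row vector). The uniform distribution on linear maps is
   the uniform distribution on 'M['F_2]_(N, l). *)
Definition prob_linmap (R : realType) (N l : nat)
  (E : 'M['F_2]_(N, l) -> bool) : R :=
  (#|[set A : 'M['F_2]_(N, l) | E A]|)%:R / (#|{: 'M['F_2]_(N, l)}|)%:R.

(* Main.v *)
Require Import Defs.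
From HB Require Import structures.
From mathcomp Require Import all_boot all_order all_algebra.
From mathcomp Require Import all_classical all_reals all_analysis.
From mathcomp Require Import lra ring zify.
Import Order.TTheory GRing.Theory Num.Theory numFieldNormedType.Exports.
Local Open Scope ring_scope.

Definition pp (R : realType) (n : nat) : R := \prod_(j < n) (1 - (2%:R ^+ j.+1)^-1 : R).

Lemma pp_fact (R : realType) (j : nat) : 0 <= 1 - (2%:R ^+ j.+1)^-1 :> R /\ 1 - (2%:R ^+ j.+1)^-1 <= 1 :> R.
Proof.
have h1 : (1 : R) <= 2%:R ^+ j.+1 by rewrite exprn_ege1 // ler1n.
split; last by rewrite lerBlDr lerDl invr_ge0 exprn_ge0.
rewrite subr_ge0 invf_le1 //; lra.
Qed.

Lemma pp_ge0 (R : realType) n : 0 <= pp R n.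
Proof. by apply: prodr_ge0 => j _; case: (pp_fact R j). Qed.

Lemma pp_ninc (R : realType) : nonincreasing_seq (pp R).
Proof.
apply/nonincreasing_seqP => n; rewrite /pp big_ord_recr /=.
case: (pp_fact R n) => h0 h1.
by rewrite ler_piMr // pp_ge0.
Qed.

Lemma gamma_props (R : realType) n : 0 <= gamma_const R /\ gamma_const R <= pp R n.
Proof.
have cv : cvgn (pp R).
  apply: nonincreasing_is_cvgn; first exact: pp_ninc.
  by exists 0 => _ [m _ <-]; exact: pp_ge0.
split; last exact: nonincreasing_cvgn_ge (pp_ninc R) cv n.
by apply: limr_ge => //; near=> m; exact: pp_ge0.
Unshelve. all: by end_near.
Qed.

Lemma key_id (R : realType) r :
  (((2 ^ 'C(r, 2) * \prod_(j < r) (2 ^ j.+1 - 1))%N)%:R : R) = 2%:R ^+ (r * r) * pp R r.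
Proof.
elim: r => [|r IH]; first by rewrite /pp !big_ord0 bin0n expn0 mul1r mul1n.
rewrite binS bin1 /pp !big_ord_recr /= -/(pp R r).
have e1 : (2 ^ ('C(r, 2) + r) * ((\prod_(i < r) (2 ^ i.+1 - 1)) * (2 ^ r.+1 - 1)) =
   (2 ^ 'C(r, 2) * \prod_(j < r) (2 ^ j.+1 - 1)) * (2 ^ r * (2 ^ r.+1 - 1)))%N.
  by rewrite expnD; ring.
rewrite e1 natrM IH natrM natrB ?expn_gt0 // !natrX.
have h : (2%:R : R) ^+ r.+1 != 0 by rewrite expf_neq0 // pnatr_eq0.
rewrite (_ : r.+1 * r.+1 = r * r + r + r.+1)%N; last by ring.
rewrite !exprD; field; exact: h.
Qed.

Lemma cardU r : #|[set B : 'M['F_2]_r | B \in unitmx]| =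
   (2 ^ 'C(r, 2) * \prod_(j < r) (2 ^ j.+1 - 1))%N.
Proof.
case: r => [|n].
  rewrite big_ord0 bin0n (_ : [set B : 'M['F_2]_0 | B \in unitmx] = [set: 'M['F_2]_0]%SET).
    by rewrite cardsT card_mx.
  by apply/setP => B; rewrite !inE [B]flatmx0 -(flatmx0 1%:M) unitmx1.
have -> : #|[set B : 'M['F_2]_n.+1 | B \in unitmx]| = #|GLgroup n.+1 'F_2|.
  by rewrite [RHS]cardsT /= card_sub; apply: eq_card => B; rewrite !inE.
rewrite card_GL // card_Fp // big_add1 /= big_mkord.
done.
Qed.

Definition fS k (y : 'rV['F_2]_k) : 'rV['F_2]_(k + 1) :=
  if y == 0 then row_mx 0 (const_mx 1) else row_mx y 0.
Arguments fS {k} y.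

Lemma one_neq0 : (const_mx 1 : 'rV['F_2]_1) != 0.
Proof. by apply/eqP => /matrixP /(_ 0 0); rewrite !mxE. Qed.

Lemma fS_neq0 k y : @fS k y != 0.
Proof.
have [->|yn0] := eqVneq y 0; rewrite /fS ?eqxx ?(negbTE yn0); apply/negP => /eqP;
  rewrite -(row_mx0 _ 1 k 1) => /eq_row_mx [].
  by move=> _ /eqP; rewrite (negbTE one_neq0).
by move=> /eqP; rewrite (negbTE yn0).
Qed.

Lemma fS_inj k : injective (@fS k).
Proof.
move=> y z; rewrite /fS; case: eqP => [->|/eqP yn0]; case: eqP => [->|/eqP zn0] //.
- by move/eq_row_mx => [] _ /eqP; rewrite (negbTE one_neq0).
- by move/eq_row_mx => [] _ /eqP; rewrite eq_sym (negbTE one_neq0).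
- by move/eq_row_mx => [].
Qed.

Lemma fS_mul k l (y : 'rV['F_2]_k) (M : 'M['F_2]_(k, l)) (w : 'M['F_2]_(1, l)) : y != 0 ->
  @fS k y *m col_mx M w = y *m M.
Proof. by rewrite /fS => /negbTE ->; rewrite mul_row_col mul0mx addr0. Qed.

Definition gmap r a t (p : 'M['F_2]_r * 'M['F_2]_(r,t) * 'M['F_2]_(a,r) * 'M['F_2]_(1, r+t)) :
  'M['F_2]_(r + a + 1, r + t) :=
  let: (B1, B2, C1, w) := p in
  col_mx (col_mx (row_mx B1 B2) (row_mx C1 (C1 *m invmx B1 *m B2))) w.

Arguments gmap {r a t} p.

Lemma gmap_inj r a t : injective (@gmap r a t).
Proof.
move=> [[[B1 B2] C1] w] [[[B1' B2'] C1'] w'] /=.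
move/eq_col_mx => [] /eq_col_mx [] /eq_row_mx [] -> -> /eq_row_mx [] -> _ ->.
by [].
Qed.

Lemma gmap_event r a t p : (1 <= a)%N -> p.1.1.1 \in unitmx ->
  (2 ^ a - 2 < #|[set x in (@fS (r + a)) @: [set: 'rV['F_2]_(r + a)]%SET | x *m @gmap r a t p == 0%R]|)%N.
Proof.
move: p => [[[B1 B2] C1] w] /= a1 uB1.
pose zy (y : 'rV['F_2]_a) : 'rV['F_2]_(r + a) := row_mx (- (y *m C1 *m invmx B1)) y.
have zy_inj : injective zy by move=> y y' /eq_row_mx [].
have zy0 y : y != 0 -> zy y != 0.
  by move=> yn0; apply/negP => /eqP; rewrite -(row_mx0 _ 1 r a) => /eq_row_mx [] _ /eqP; rewrite (negbTE yn0).
have sub : (fS \o zy) @: [set~ 0] \subset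
     [set x in (@fS (r + a)) @: [set: 'rV['F_2]_(r + a)]%SET | x *m gmap (B1, B2, C1, w) == 0%R].
  apply/fintype.subsetP => x /imsetP [y]; rewrite !inE => yn0 -> /=.
  rewrite imset_f ?inE //= fS_mul ?zy0 //.
  rewrite /zy mul_row_col !mul_mx_row add_row_mx.
  rewrite mulNmx -!mulmxA mulVmx // mulmx1 addNr.
  by rewrite mulNmx !mulmxA addNr row_mx0.
have := subset_leq_card sub; rewrite card_imset; last first.
  by move=> y y' /= /fS_inj /zy_inj.
rewrite cardsC1 card_mx card_Fp // mul1n.
have : (2 <= 2 ^ a)%N by rewrite -{1}(expn1 2) leq_pexp2l.
rewrite -subn1; set X := #|_|; move=> h1 h2; apply: leq_trans h2; rewrite subnSK // ?subn1 ?prednK //; lia.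
Qed.

Lemma count_event r a t : (1 <= a)%N ->
  (#|[set B : 'M['F_2]_r | B \in unitmx]| * 2 ^ (r * t) * 2 ^ (a * r) * 2 ^ (r + t) <=
  #|[set A : 'M['F_2]_(r + a + 1, r + t) |
      (2 ^ a - 2 < #|[set x in (@fS (r + a)) @: [set: 'rV['F_2]_(r + a)]%SET | x *m A == 0%R]|)%N]|)%N.
Proof.
move=> a1.
set U := [set B : 'M['F_2]_r | B \in unitmx].
set D := finset.setX (finset.setX (finset.setX U [set: 'M['F_2]_(r, t)]%SET) [set: 'M['F_2]_(a, r)]%SET)
   [set: 'M['F_2]_(1, r + t)]%SET.
have cD : #|D| = (#|U| * 2 ^ (r * t) * 2 ^ (a * r) * 2 ^ (r + t))%N.
  by rewrite !cardsX !cardsT !card_mx !card_Fp // mul1n.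
rewrite -cD -(card_imset _ (@gmap_inj r a t)).
apply: subset_leq_card; apply/fintype.subsetP => A /imsetP [p].
rewrite !inE => /andP [/andP [/andP [uB _] _] _] ->.
exact: gmap_event.
Qed.

Theorem propositionB5 (R : realType) (l d a : nat) :
  (1 <= a)%N -> (d - l <= a)%N -> (a <= d)%N ->
  exists (N : nat) (S : {set 'rV['F_2]_N}),
    [/\ (0 < N)%N, (0 : 'rV['F_2]_N) \notin S, #|S| = (2 ^ d)%N &
      prob_linmap R
        (fun A : 'M['F_2]_(N, l) => (2 ^ a - 2 < #|[set x in S | x *m A == 0%R]|)%N)
      >= gamma_const R ^+ 2 * ((2%:R ^+ d / 2%:R ^+ l) ^+ a) * (2%:R ^+ (a * a))^-1].
Proof.
move=> a1 hdl had.
have [r Hd] : exists r, d = (r + a)%N by exists (d - a)%N; lia.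
have [t Hl] : exists t, l = (r + t)%N by exists (l - r)%N; lia.
subst d l.
exists (r + a + 1)%N, ((@fS (r + a)) @: [set: 'rV['F_2]_(r + a)]%SET).
split.
- by rewrite addn1.
- by apply/imsetP => [[y _ /esym /eqP]]; rewrite (negbTE (fS_neq0 _ y)).
- by rewrite card_imset; [rewrite cardsT card_mx card_Fp // mul1n | exact: (@fS_inj (r + a))].
have ce := @count_event r a t a1.
rewrite /prob_linmap card_mx card_Fp //.
have [g0 g1] := gamma_props R r.
have pr : pp R r = (#|[set B : 'M['F_2]_r | B \in unitmx]|)%:R / 2%:R ^+ (r * r).
  rewrite cardU key_id mulrC mulrA mulVf ?mul1r // expf_neq0 // pnatr_eq0 //.
set E := #|_|.
set cU := #|[set B : 'M['F_2]_r | B \in unitmx]| in ce pr.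
have h2 : (0 : R) < 2%:R by rewrite ltr0n.
have lhs : (2%:R ^+ (r + a) / 2%:R ^+ (r + t)) ^+ a * (2%:R ^+ (a * a))^-1
    = (2%:R ^+ (a * t))^-1 :> R.
  rewrite !exprD expr_div_n !exprMn -!exprM.
  rewrite [(t * a)%N]mulnC; field; rewrite ?expf_neq0 ?pnatr_eq0 // ?mulf_neq0 ?expf_neq0 ?pnatr_eq0 //.
rewrite -mulrA lhs.
apply: (@le_trans _ _ ((cU * 2 ^ (r * t) * 2 ^ (a * r) * 2 ^ (r + t))%N%:R
        / (2 ^ ((r + a + 1) * (r + t)))%N%:R)); last first.
  by apply: ler_wpM2r; [rewrite invr_ge0 | rewrite ler_nat].
rewrite (_ : ((r + a + 1) * (r + t) = r * r + r * t + a * r + (r + t) + a * t)%N); last by ring.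
rewrite !natrM !natrX !exprD.
have -> : cU%:R = pp R r * 2%:R ^+ (r * r) :> R.
  by rewrite pr mulrVK // unitfE expf_neq0 // pnatr_eq0.
apply: (@le_trans _ _ (gamma_const R * (2%:R ^+ (a * t))^-1)).
  apply: ler_wpM2r; first by rewrite invr_ge0 exprn_ge0 // ler0n.
  rewrite expr2 ler_piMr //.
  by case: (gamma_props R 0) => _; rewrite /pp big_ord0.
have nz (k : nat) : (2%:R : R) ^+ k != 0 by rewrite expf_neq0 // pnatr_eq0.
set P := pp R r.
rewrite [X in _ <= X](_ : _ = P * (2%:R ^+ (a * t))^-1); last first.
  by field; rewrite !nz.
by apply: ler_wpM2r => //; rewrite invr_ge0 exprn_ge0 // ler0n.
Qed.
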